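(* Let $A,B\in\mathscr{B}(\Omega)$ with $\underline{P}(B)>0$ and $\underline{P}(B^c)>0$, and let $\mathcal{B}=\{B,B^c\}$. If $\mathcal{B}$ dilates $A$ under either Dempster's rule or the Geometric rule, then there exists a probability measure $P^*\ge\underline{P}$ such that $P^*(A\cap B)=P^*(A)P^*(B)$.
   Context: $\Omega$ is a separable, completely metrizable space with Borel $\sigma$-algebra $\mathscr{B}(\Omega)$; $\underline{P}$ is a Choquet capacity of order 2 on $\mathscr{B}(\Omega)$ (a coherent lower probability with weakly compact set of dominating measures satisfying $\underline{P}(A\cup B)\ge\underline{P}(A)+\underline{P}(B)-\underline{P}(A\cap B)$); $\Pi=\{P:P\ge\underline{P}\}$, $\underline{P}(A)=\inf_{P\in\Pi}P(A)$, $\overline{P}(A)=\sup_{P\in\Pi}P(A)=1-\underline{P}(A^c)$. Dempster's rule: $\overline{P}_{\mathfrak{D}}(A\mid Z)=\overline{P}(A\cap Z)/\overline{P}(Z)$, $\underline{P}_{\mathfrak{D}}(A\mid Z)=1-\overline{P}_{\mathfrak{D}}(A^c\mid Z)$. Geometric rule: $\underline{P}_{\mathfrak{G}}(A\mid Z)=\underline{P}(A\cap Z)/\underline{P}(Z)$, $\overline{P}_{\mathfrak{G}}(A\mid Z)=1-\underline{P}_{\mathfrak{G}}(A^c\mid Z)$. For a rule with conditional lower/upper probabilities $\underline{P}_\bullet,\overline{P}_\bullet$, $\mathcal{B}$ dilates $A$ if $\sup_{Z\in\mathcal{B}}\underline{P}_\bullet(A\mid Z)\le\underline{P}(A)\le\overline{P}(A)\le\inf_{Z\in\mathcal{B}}\overline{P}_\bullet(A\mid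 Z)$ with at least one of the two outer inequalities strict. *)

(* Defs.v *)
From HB Require Import structures.
From mathcomp Require Import all_boot all_order all_algebra.
From mathcomp Require Import all_classical all_reals all_analysis.
Set Implicit Arguments. Unset Strict Implicit. Unset Printing Implicit Defensive.
Import Order.TTheory GRing.Theory Num.Theory.
Import numFieldNormedType.Exports.
Local Open Scope classical_set_scope.
Local Open Scope ring_scope.

(* We take the complete
   (pseudo)metric as given structure, and require Hausdorff (so the metric is a
   genuine metric) and separability (a countable dense subset). *)
Definition polish_space (R : realType) (T : completePseudoMetricType R) : Prop :=
  hausdorff_space T /\ exists D : set T, countable D /\ dense D.

Definition borel_type (R : realType) (T : completePseudoMetricType R) :=
  g_sigma_algebraType (@open T).

Section Capacity.
Variables (R : realType) (T : completePseudoMetricType R).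
Notation Omega := (borel_type T).

Definition core (Plow : set T -> R) : set (probability Omega R) :=
  [set P | forall A : set Omega, measurable A -> ((Plow A)%:E <= P A)%E].

(* Coherent lower probability: Plow is the lower envelope of its core
   (this forces the core to be nonempty, since Plow is real valued). *)
Definition coherent (Plow : set T -> R) : Prop :=
  forall A : set Omega, measurable A ->
    (Plow A)%:E = ereal_inf [set P A | P in core Plow].

Definition two_monotone (Plow : set T -> R) : Prop :=
  forall A B : set Omega, measurable A -> measurable B ->
    Plow A + Plow B - Plow (A `&` B) <= Plow (A `|` B).

Definition weak_cvg (Ps : nat -> probability Omega R) (P : probability Omega R)
  : Prop :=
  forall f : T -> R, continuous f -> (exists M : R, forall x, `|f x| <= M) ->
    (fun n => (\int[Ps n]_(x in [set: Omega]) (f x)%:E)%E) @ \oo -->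
      (\int[P]_(x in [set: Omega]) (f x)%:E)%E.

(* On a separable metric
   space the weak topology on probability measures is metrizable (Levy-Prokhorov
   metric), so compactness is equivalent to sequential compactness. *)
Definition weakly_compact (S : set (probability Omega R)) : Prop :=
  forall Ps : nat -> probability Omega R, (forall n, S (Ps n)) ->
    exists phi : nat -> nat, (forall n, (phi n < phi n.+1)%N) /\
      exists2 P, S P & weak_cvg (Ps \o phi) P.

Definition choquet2 (Plow : set T -> R) : Prop :=
  coherent Plow /\ weakly_compact (core Plow) /\ two_monotone Plow.

Definition upper (Plow : set T -> R) (A : set T) : R := 1 - Plow (~` A).

Definition upD (Plow : set T -> R) (A Z : set T) : R :=
  upper Plow (A `&` Z) / upper Plow Z.
Definition lowD (Plow : set T -> R) (A Z : set T) : R :=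
  1 - upD Plow (~` A) Z.

Definition lowG (Plow : set T -> R) (A Z : set T) : R :=
  Plow (A `&` Z) / Plow Z.
Definition upG (Plow : set T -> R) (A Z : set T) : R :=
  1 - lowG Plow (~` A) Z.

Definition dilates (Plow : set T -> R) (lowc upc : set T -> set T -> R)
    (Bs : set (set T)) (A : set T) : Prop :=
  let s := sup [set lowc A Z | Z in Bs] in
  let i := inf [set upc A Z | Z in Bs] in
  s <= Plow A /\ Plow A <= upper Plow A /\ upper Plow A <= i /\
  (s < Plow A \/ upper Plow A < i).

End Capacity.

(* Main.v *)
Require Import Defs.
From HB Require Import structures.
From mathcomp Require Import all_boot all_order all_algebra.
From mathcomp Require Import all_classical all_reals all_analysis.
From mathcomp Require Import lra ring.
Import Order.TTheory GRing.Theory Num.Theory.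
Import numFieldNormedType.Exports.
Set Implicit Arguments. Unset Strict Implicit.
Local Open Scope classical_set_scope.
Local Open Scope ring_scope.

Section mix.
Context d (T : measurableType d) (R : realType) (P1 P2 : probability T R)
  (t : R) (t0 : 0 <= t) (t1 : t <= 1).
Let t1' : 0 <= 1 - t. Proof. by rewrite subr_ge0. Qed.
Definition pmix : set T -> \bar R :=
  measure_add (mscale (NngNum t0) P1) (mscale (NngNum t1') P2).
HB.instance Definition _ := Measure.copy pmix
  (measure_add (mscale (NngNum t0) P1) (mscale (NngNum t1') P2)).
Lemma pmixE A : pmix A = (t%:E * P1 A + (1 - t)%:E * P2 A)%E.
Proof. by rewrite /pmix measure_addE. Qed.
Let pmix_setT : pmix setT = 1%E.
Proof. by rewrite pmixE !probability_setT !mule1 -EFinD subrKC. Qed.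
HB.instance Definition _ := Measure_isProbability.Build _ _ _ pmix pmix_setT.
Definition Pmix : probability T R := pmix.
End mix.

Section pr.
Context d (T : measurableType d) (R : realType) (P : probability T R).
Definition pr (X : set T) : R := fine (P X).
Lemma prE X : measurable X -> P X = (pr X)%:E.
Proof.
move=> mX; rewrite /pr fineK // ge0_fin_numE //.
by rewrite (le_lt_trans (probability_le1 _ mX)) // ltry.
Qed.
Lemma pr_ge0 X : measurable X -> 0 <= pr X.
Proof. by move=> mX; rewrite -lee_fin -prE. Qed.
Lemma pr_le1 X : measurable X -> pr X <= 1.
Proof. by move=> mX; rewrite -lee_fin -prE // probability_le1. Qed.
Lemma prC X : measurable X -> pr (~` X) = 1 - pr X.
Proof.
move=> mX; apply/EFin_inj; rewrite -prE; last exact: measurableC.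
by rewrite probability_setC // prE.
Qed.
Lemma prDI X Y : measurable X -> measurable Y -> pr (X `&` ~` Y) = pr X - pr (X `&` Y).
Proof.
move=> mX mY; have mXY : measurable (X `&` Y) by exact: measurableI.
have mXnY : measurable (X `&` ~` Y) by apply: measurableI => //; exact: measurableC.
apply/EFin_inj; rewrite EFinB -!prE //.
rewrite -setDE measureD //.
by rewrite (le_lt_trans (probability_le1 _ mX)) // ltry.
Qed.
End pr.
Section main.
Context (R : realType) (T : completePseudoMetricType R).
Notation Omega := (borel_type T).
Variable (Plow : set T -> R).
Hypothesis coh : coherent Plow.

Lemma Plow_ge0 (X : set Omega) : measurable X -> 0 <= Plow X.
Proof.
move=> mX; rewrite -lee_fin coh //; apply: le_ereal_inf_tmp.
by move=> _ [P _ <-]; exact: measure_ge0.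
Qed.

Lemma core_n0 : exists P, core Plow P.
Proof.
have : (ereal_inf [set P (setT : set Omega) | P in core Plow] < (Plow setT + 1)%:E)%E.
  by rewrite -coh // lte_fin ltrDl.
by move/ereal_inf_lt => [_ [P cP _] _]; exists P.
Qed.

Lemma core_ge (P : probability Omega R) (X : set Omega) :
  core Plow P -> measurable X -> Plow X <= pr P X.
Proof. by move=> cP mX; rewrite -lee_fin -prE //; exact: cP. Qed.

Lemma core_le_upper (P : probability Omega R) (X : set Omega) :
  core Plow P -> measurable X -> pr P X <= upper Plow X.
Proof.
move=> cP mX; have := core_ge cP (measurableC mX).
by rewrite prC // /upper; lra.
Qed.

Lemma upper_ge (X : set Omega) : measurable X -> Plow X <= upper Plow X.
Proof.
move=> mX; have [P cP] := core_n0.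
exact: le_trans (core_ge cP mX) (core_le_upper cP mX).
Qed.

Lemma L1 (C Z : set Omega) : measurable C -> measurable Z ->
  Plow (C `&` Z) < Plow C * Plow Z ->
  exists2 P, core Plow P & pr P (C `&` Z) < pr P C * pr P Z.
Proof.
move=> mC mZ; rewrite -lte_fin coh; last exact: measurableI.
move/ereal_inf_lt => [_ [P cP <-]]; rewrite prE; last exact: measurableI.
rewrite lte_fin => h; exists P => //.
apply: (lt_le_trans h); apply: ler_pM; try exact: Plow_ge0.
  exact: core_ge. exact: core_ge.
Qed.

Lemma L2 (C Z : set Omega) : measurable C -> measurable Z ->
  upper Plow C * upper Plow Z < upper Plow (C `&` Z) ->
  exists2 P, core Plow P & pr P C * pr P Z < pr P (C `&` Z).
Proof.
move=> mC mZ; have mCZ : measurable (C `&` Z) by exact: measurableI.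
move=> h.
have : Plow (~` (C `&` Z)) < 1 - upper Plow C * upper Plow Z.
  by move: h; rewrite [upper Plow (C `&` Z)]/upper; lra.
rewrite -lte_fin coh; last exact: measurableC.
move/ereal_inf_lt => [_ [P cP <-]]; rewrite prE; last exact: measurableC.
rewrite lte_fin prC // => h2; exists P => //.
have : pr P C * pr P Z <= upper Plow C * upper Plow Z.
  apply: ler_pM; try exact: pr_ge0.
    exact: core_le_upper. exact: core_le_upper.
lra.
Qed.

Lemma mix_core (P1 P2 : probability Omega R) (t : R) (t0 : 0 <= t) (t1 : t <= 1) :
  core Plow P1 -> core Plow P2 -> core Plow (Pmix P1 P2 t0 t1).
Proof.
move=> c1 c2 X mX; rewrite /= pmixE !prE // -!EFinM -EFinD lee_fin.
have h1 := core_ge c1 mX; have h2 := core_ge c2 mX.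
have : t * Plow X <= t * pr P1 X by apply: ler_wpM2l.
have : (1 - t) * Plow X <= (1 - t) * pr P2 X by apply: ler_wpM2l; lra.
lra.
Qed.

Lemma pr_mix (P1 P2 : probability Omega R) (t : R) (t0 : 0 <= t) (t1 : t <= 1) X :
  measurable X -> pr (Pmix P1 P2 t0 t1) X = t * pr P1 X + (1 - t) * pr P2 X.
Proof.
move=> mX; apply/EFin_inj; rewrite -prE // /= pmixE !prE //.
Qed.

End main.
Section final.
Context (R : realType) (T : completePseudoMetricType R).
Notation Omega := (borel_type T).
Variable (Plow : set T -> R).
Hypothesis coh : coherent Plow.
Variables (A B : set Omega).
Hypotheses (mA : measurable A) (mB : measurable B).

Definition ff (P : probability Omega R) := pr P (A `&` B) - pr P A * pr P B.

Lemma zero_of (P1 P2 : probability Omega R) : core Plow P1 -> core Plow P2 ->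
  ff P1 < 0 -> 0 < ff P2 ->
  exists2 P : probability Omega R, core Plow P & P (A `&` B) = (P A * P B)%E.
Proof.
have mAB : measurable (A `&` B) by exact: measurableI.
move=> c1 c2; rewrite /ff.
set a1 := pr P1 (A `&` B); set a2 := pr P2 (A `&` B).
set x1 := pr P1 A; set x2 := pr P2 A; set y1 := pr P1 B; set y2 := pr P2 B.
move=> h1 h2.
pose p : {poly R} := (a2%:P + (a1 - a2) *: 'X) -
  (x2%:P + (x1 - x2) *: 'X) * (y2%:P + (y1 - y2) *: 'X).
have hp t : p.[t] = (t * a1 + (1 - t) * a2) - (t * x1 + (1 - t) * x2) * (t * y1 + (1 - t) * y2).
  by rewrite /p !hornerE; ring.
have [c hc pc] : exists2 c, c \in `[0, 1] & p.[c] = 0.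
  apply: IVT => //.
    apply: continuous_subspaceT; exact: continuous_horner.
  rewrite !hp /=.
  have -> : 0 * a1 + (1 - 0) * a2 - (0 * x1 + (1 - 0) * x2) * (0 * y1 + (1 - 0) * y2) = a2 - x2 * y2 by ring.
  have -> : 1 * a1 + (1 - 1) * a2 - (1 * x1 + (1 - 1) * x2) * (1 * y1 + (1 - 1) * y2) = a1 - x1 * y1 by ring.
  rewrite ge_min le_max; apply/andP; split; apply/orP; [right|left]; apply/ltW => //.
move: hc; rewrite in_itv /= => /andP[c0 c1'].
exists (Pmix P1 P2 c0 c1'); first exact: mix_core.
rewrite !prE // -EFinM !pr_mix //; congr EFin.
by move: pc; rewrite hp => /eqP; rewrite subr_eq0 => /eqP.
Qed.
End final.
Section final2.
Context (R : realType) (T : completePseudoMetricType R).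
Notation Omega := (borel_type T).
Variables (A B : set Omega).
Hypotheses (mA : measurable A) (mB : measurable B).

Lemma ffC1 (P : probability Omega R) : pr P (A `&` ~` B) - pr P A * pr P (~` B) = - ff A B P.
Proof. rewrite /ff prDI // prC //; ring. Qed.
Lemma ffC2 (P : probability Omega R) : pr P (~` A `&` B) - pr P (~` A) * pr P B = - ff A B P.
Proof. rewrite /ff setIC prDI // prC // setIC; ring. Qed.
Lemma ffC3 (P : probability Omega R) : pr P (~` A `&` ~` B) - pr P (~` A) * pr P (~` B) = ff A B P.
Proof.
rewrite /ff prDI //; last exact: measurableC.
rewrite setIC prDI // !prC // setIC; ring.
Qed.

Lemma sup_ge (g : set T -> R) (Z : set T) : Z = B \/ Z = ~` B ->
  g Z <= sup [set g Z | Z in [set B; ~` B]].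
Proof.
move=> hZ; apply: ub_le_sup; last by exists Z.
exists (Num.max (g B) (g (~` B))) => _ [W [->|->] <-]; by rewrite le_max lexx ?orbT.
Qed.

Lemma inf_le (g : set T -> R) (Z : set T) : Z = B \/ Z = ~` B ->
  inf [set g Z | Z in [set B; ~` B]] <= g Z.
Proof.
move=> hZ; apply: ge_inf; last by exists Z.
exists (Num.min (g B) (g (~` B))) => _ [W [->|->] <-]; by rewrite ge_min lexx ?orbT.
Qed.
End final2.
Unset Implicit Arguments.

Theorem corollary5p7 (R : realType) (T : completePseudoMetricType R)
  (Plow : set T -> R) (A B : set (borel_type T)) :
  polish_space T -> choquet2 Plow ->
  measurable A -> measurable B ->
  0 < Plow B -> 0 < Plow (~` B) ->
  (dilates Plow (lowD Plow) (upD Plow) [set B; ~` B] A \/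
   dilates Plow (lowG Plow) (upG Plow) [set B; ~` B] A) ->
  exists2 P : probability (borel_type T) R, core Plow P &
    P (A `&` B) = (P A * P B)%E.
Proof.
move=> _ [coh _] mA mB pB pnB.
have mnA := measurableC mA; have mnB := measurableC mB.
have fin : (exists2 P, core Plow P & ff A B P < 0) ->
    (exists2 P, core Plow P & 0 < ff A B P) ->
    exists2 P : probability (borel_type T) R, core Plow P &
    P (A `&` B) = (P A * P B)%E.
  by move=> [P1 c1 h1] [P2 c2 h2]; exact: (zero_of mA mB c1 c2 h1 h2).
have upB := lt_le_trans pB (upper_ge coh mB).
have upnB := lt_le_trans pnB (upper_ge coh mnB).
have posZ (Z : set T) : Z = B \/ Z = ~` B -> 0 < Plow Z /\ 0 < upper Plow Z /\ measurable (Z : set (borel_type T)).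
  by case=> ->.
case=> [[_ [_ [_ [hs|hi]]]] | [_ [_ [_ [hs|hi]]]]].
- have k (Z : set T) : Z = B \/ Z = ~` B ->
      exists2 P, core Plow P & pr P (~` A) * pr P Z < pr P (~` A `&` Z).
    move=> hZ; have [_ [uZ mZ]] := posZ Z hZ.
    apply: L2 => //.
    have := le_lt_trans (sup_ge (lowD Plow A) hZ) hs.
    rewrite /lowD /upD => h.
    have e : upper Plow (~` A) = 1 - Plow A by rewrite /upper setCK.
    have : upper Plow (~` A) < upper Plow (~` A `&` Z) / upper Plow Z.
      by rewrite e; lra.
    by rewrite ltr_pdivlMr.
  apply: fin.
    have [P cP h] := k B (or_introl erefl); exists P => //.
    have := ffC2 mA mB P; lra.
  have [P cP h] := k (~` B) (or_intror erefl); exists P => //.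
  have := ffC3 mA mB P; lra.
- have k (Z : set T) : Z = B \/ Z = ~` B ->
      exists2 P, core Plow P & pr P A * pr P Z < pr P (A `&` Z).
    move=> hZ; have [_ [uZ mZ]] := posZ Z hZ.
    apply: L2 => //.
    have := lt_le_trans hi (inf_le (upD Plow A) hZ).
    by rewrite /upD ltr_pdivlMr.
  apply: fin.
    have [P cP h] := k (~` B) (or_intror erefl); exists P => //.
    have := ffC1 mA mB P; lra.
  have [P cP h] := k B (or_introl erefl); exists P => //.
  rewrite /ff; lra.
- have k (Z : set T) : Z = B \/ Z = ~` B ->
      exists2 P, core Plow P & pr P (A `&` Z) < pr P A * pr P Z.
    move=> hZ; have [pZ [_ mZ]] := posZ Z hZ.
    apply: L1 => //.
    have := le_lt_trans (sup_ge (lowG Plow A) hZ) hs.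
    by rewrite /lowG ltr_pdivrMr.
  apply: fin.
    have [P cP h] := k B (or_introl erefl); exists P => //.
    rewrite /ff; lra.
  have [P cP h] := k (~` B) (or_intror erefl); exists P => //.
  have := ffC1 mA mB P; lra.
- have k (Z : set T) : Z = B \/ Z = ~` B ->
      exists2 P, core Plow P & pr P (~` A `&` Z) < pr P (~` A) * pr P Z.
    move=> hZ; have [pZ [_ mZ]] := posZ Z hZ.
    apply: L1 => //.
    have := lt_le_trans hi (inf_le (upG Plow A) hZ).
    rewrite /upG /lowG /upper => h.
    have : Plow (~` A `&` Z) / Plow Z < Plow (~` A) by lra.
    by rewrite ltr_pdivrMr.
  apply: fin.
    have [P cP h] := k (~` B) (or_intror erefl); exists P => //.
    have := ffC3 mA mB P; lra.
  have [P cP h] := k B (or_introl erefl); exists P => //.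
  have := ffC2 mA mB P; lra.
Qed.
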